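(* Let $G$ be a finite permutation group acting quasi-transitively on a finite set $\Omega$, with constant $t>1$, and suppose $G$ is not transitive on $\Omega$. If $G$ acts $2$-transitively on a $G$-orbit $\Delta$, then $|G|=|\Delta|(|\Delta|-1)t$. Consequently $G$ acts $2$-transitively on at most one of its orbits on $\Omega$.
   Context: A finite permutation group $G$ on a finite set $\Omega$ is called quasi-transitive if there is a natural number $t>1$ such that $|G_{\alpha\beta}|=t$ for all two-element subsets $\{\alpha,\beta\}\subseteq\Omega$, where $G_{\alpha\beta}$ denotes the pointwise stabiliser of $\alpha$ and $\beta$ in $G$. *)

(* Defs.v *)
From mathcomp Require Import all_boot all_fingroup.
From mathcomp Require Import primitive_action.
Local Open Scope group_scope.
Set Implicit Arguments. Unset Strict Implicit. Unset Printing Implicit Defensive.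

Definition quasi_transitive_with (T : finType) (G : {group {perm T}}) (t : nat) :=
  1 < t /\ forall a b : T, a != b -> #|'C_G([set a; b] | 'P)| = t.

Definition is_orbit (T : finType) (G : {group {perm T}}) (D : {set T}) :=
  D \in orbit 'P G @: [set: T].

(* Main.v *)
Require Import Defs.
From mathcomp Require Import all_boot all_fingroup.
From mathcomp Require Import primitive_action.
From mathcomp Require Import zify.

Set Implicit Arguments. Unset Strict Implicit.

Lemma ar1 m n : 1 < m -> 1 < n -> (m * (m - 1) = n * (n - 1))%N -> m = n.
Proof. move=> *; nia. Qed.
Lemma ar2 n : 1 < n -> (n <= n - 1)%N -> False.
Proof. move=> *; lia. Qed.
Lemma ar3 n : 1 < n -> (n - 1 + (n - 1) <= n)%N -> (n - 1 = 1)%N.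
Proof. move=> *; lia. Qed.
Lemma ar4 t : 1 < t -> t <= 1 -> False.
Proof. move=> *; lia. Qed.

Section S.
Variables (T : finType) (G : {group {perm T}}) (t : nat).

Lemma stab2 a b : ('C_('C_G[a | 'P])[b | 'P] = 'C_G([set a; b] | 'P))%g.
Proof.
apply/setP=> g; rewrite !inE subUset /=.
by case: (g \in G); case: ([set a] \subset _); case: ([set b] \subset _).
Qed.

Lemma orbit_of D : is_orbit G D -> forall a, a \in D -> orbit 'P G a = D.
Proof.
case/imsetP=> x _ -> a ha; exact/orbit_eqP.
Qed.

Lemma two_pts D : [transitive^2 G, on D | 'P] ->
  exists a b, [/\ a \in D, b \in D & a != b].
Proof.
case/imsetP=> u /dtuple_onP [inj inD] _.
exists (tnth u ord0), (tnth u (@Ordinal 2 1 isT)); split; try exact: inD.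
by apply/eqP=> /inj.
Qed.

Lemma stab_orbit D a b : is_orbit G D -> [transitive^2 G, on D | 'P] ->
  a \in D -> b \in D -> a != b ->
  orbit 'P 'C_G[a | 'P]%g b = D :\ a.
Proof.
move=> oD tD aD bD nab; apply/setP=> y; rewrite !inE.
apply/idP/idP.
  case/orbitP=> g /setIP[gG /astab1P /= ga] <-.
  apply/andP; split.
    by rewrite -ga /= (inj_eq (@perm_inj _ g)) eq_sym.
  rewrite -(orbit_of oD bD); exact: mem_orbit.
case/andP=> nya yD.
have t1 : [tuple a; b] \in 2.-dtuple(D).
  by rewrite inE /= !inE nab /=; apply/subsetP=> z; rewrite !inE => /orP[]/eqP->.
have t2 : [tuple a; y] \in 2.-dtuple(D).
  by rewrite inE /= !inE eq_sym nya /=; apply/subsetP=> z; rewrite !inE => /orP[]/eqP->.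
have [g gG e] := atransP2 tD t1 t2.
have := congr1 (fun u : 2.-tuple T => tnth u ord0) e.
have := congr1 (fun u : 2.-tuple T => tnth u (@Ordinal 2 1 isT)) e.
rewrite /= !tnth_map /= => ey ea.
move: ey ea; rewrite !(tnth_nth a) /= => ey ea.
apply/orbitP; exists g; last by rewrite ey.
by rewrite inE gG; apply/astab1P.
Qed.

Lemma cardGa D a : quasi_transitive_with G t -> is_orbit G D ->
  [transitive^2 G, on D | 'P] -> a \in D ->
  #|'C_G[a | 'P]%g| = ((#|D| - 1) * t)%N.
Proof.
move=> [t1 qt] oD tD aD.
have [x [y [xD yD nxy]]] := two_pts tD.
have [b [bD nab]] : exists b, b \in D /\ a != b.
  case: (eqVneq a x) => [->|]; last by exists x.
  by exists y.
have := card_orbit_stab 'P 'C_G[a | 'P]%G b.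
rewrite /= stab2 qt // (stab_orbit oD tD aD bD nab).
by rewrite (cardsD1 a D) aD add1n subn1 /= => <-.
Qed.

Lemma cardG D : quasi_transitive_with G t -> is_orbit G D ->
  [transitive^2 G, on D | 'P] -> #|G| = (#|D| * (#|D| - 1) * t)%N.
Proof.
move=> qt oD tD.
have [a [b [aD _ _]]] := two_pts tD.
by rewrite -(card_orbit_stab 'P G a) (orbit_of oD aD) (cardGa qt oD tD aD) mulnA.
Qed.

Lemma two_orbits D1 D2 : quasi_transitive_with G t -> is_orbit G D1 -> is_orbit G D2 ->
  [transitive^2 G, on D1 | 'P] -> [transitive^2 G, on D2 | 'P] -> D1 = D2.
Proof.
move=> qt oD1 oD2 tD1 tD2.
case: (qt) => t1 qtt.
have [a [a' [aD1 a'D1 naa']]] := two_pts tD1.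
have [b [b' [bD2 b'D2 nbb']]] := two_pts tD2.
have n1 : 1 < #|D1| by apply/card_gt1P; exists a, a'.
have n2 : 1 < #|D2| by apply/card_gt1P; exists b, b'.
have en : #|D1| = #|D2|.
  have := cardG qt oD2 tD2; rewrite (cardG qt oD1 tD1).
  move/eqP; rewrite eqn_pmul2r; last exact: ltnW t1.
  by move/eqP=> e; apply: ar1.
case: (boolP (a \in D2)) => [aD2|naD2].
  by rewrite -(orbit_of oD1 aD1) (orbit_of oD2 aD2).
exfalso.
set Ga := 'C_G[a | 'P]%G.
have cGa : #|Ga| = ((#|D1| - 1) * t)%N by exact: cardGa qt oD1 tD1 aD1.
have orb : forall c, c \in D2 -> orbit 'P Ga c \subset D2 /\ #|orbit 'P Ga c| = (#|D1| - 1)%N.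
  move=> c cD2; split.
    apply/subsetP=> z /orbitP [g /setIP [gG _] <-].
    by rewrite -(orbit_of oD2 cD2); apply: mem_orbit.
  have := card_orbit_stab 'P Ga c.
  rewrite /= stab2 qtt; last by apply/eqP=> e; rewrite e cD2 in naD2.
  rewrite cGa => /eqP; rewrite eqn_pmul2r; last exact: ltnW t1.
  by move/eqP.
have [sO1 cO1] := orb b bD2.
have [c [cD2 ncO1]] : exists c, c \in D2 /\ c \notin orbit 'P Ga b.
  case: (boolP (D2 \subset orbit 'P Ga b)) => [sD|/subsetPn [c cD nc]]; last by exists c.
  by have := subset_leq_card sD; rewrite cO1 -en => /(ar2 n1).
have [sO2 cO2] := orb c cD2.
have dis : orbit 'P Ga b :&: orbit 'P Ga c = set0.
  apply/setP=> z; rewrite !inE; apply/negbTE/negP => /andP [zb zc].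
  by move: zb; rewrite (orbit_transl b zc) (negbTE ncO1).
have := subset_leq_card ((introT subUsetP (conj sO1 sO2))).
rewrite cardsU dis cards0 subn0 cO1 cO2 => le.
have cGat : #|Ga| = t by rewrite cGa -en in le *; rewrite (ar3 n1 le) mul1n.
have sub1 : (Ga \subset [1])%g.
  apply/subsetP=> g gGa; rewrite inE; apply/eqP/permP=> z; rewrite perm1.
  case: (eqVneq z a) => [->|nza].
    by move: gGa => /setIP [_ /astab1P].
  have sGa : 'C_G([set a; z] | 'P)%g \subset Ga by rewrite -stab2 subsetIl.
  have eq : 'C_G([set a; z] | 'P)%g = Ga.
    have naz : a != z by rewrite eq_sym.
    by apply/eqP; rewrite eqEcard sGa cGat (qtt _ _ naz) leqnn.
  move: gGa; rewrite -eq => /setIP [_ /astabP]; apply.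
  by rewrite !inE eqxx orbT.
by have := subset_leq_card sub1; rewrite cards1 cGat; exact: ar4 t1.
Qed.
End S.

Theorem mainTheorem5 (T : finType) (G : {group {perm T}}) (t : nat) :
  quasi_transitive_with G t ->
  ~~ [transitive G, on [set: T] | 'P] ->
  (forall D : {set T}, is_orbit G D -> [transitive^2 G, on D | 'P] ->
     #|G|%N = (#|D| * (#|D| - 1) * t)%N) /\
  (forall D1 D2 : {set T}, is_orbit G D1 -> is_orbit G D2 ->
     [transitive^2 G, on D1 | 'P] -> [transitive^2 G, on D2 | 'P] -> D1 = D2).
Proof.
move=> qt _; split=> [D oD tD | D1 D2 o1 o2 h1 h2]; [exact: cardG qt oD tD | exact: two_orbits qt o1 o2 h1 h2].
Qed.
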